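(* Let $q$ be a prime power and $m\ge 1$. Let $f(x)=\sum_{i=0}^{m-1} f_i x^{[i]}$ be a $q$-polynomial over $\mathbb{F}_{q^m}$ (where $[i]$ denotes $q^i$), and let $\bar f(x)$ be its full $q$-reverse. Let $\mathcal{A}=\{\alpha_0,\dots,\alpha_{m-1}\}$ and $\mathcal{B}=\{\beta_0,\dots,\beta_{m-1}\}$ be ordered bases of $\mathbb{F}_{q^m}$ over $\mathbb{F}_q$, with dual bases $\mathcal{A}'=\{\alpha'_0,\dots,\alpha'_{m-1}\}$ and $\mathcal{B}'=\{\beta'_0,\dots,\beta'_{m-1}\}$. Then for any $M\in\mathbb{F}_q^{m\times m}$, $$M=[f(x)]_{\mathcal{A}}^{\mathcal{B}} \iff M^T=[\bar f(x)]_{\mathcal{B}'}^{\mathcal{A}'}.$$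
   Context: A $q$-polynomial over $\mathbb{F}_{q^m}$ is $f(x)=\sum_i f_i x^{[i]}$ with $f_i\in\mathbb{F}_{q^m}$ and $x^{[i]}=x^{q^i}$; its evaluation is an $\mathbb{F}_q$-linear map $\mathbb{F}_{q^m}\to\mathbb{F}_{q^m}$. Coefficients are indexed cyclically: $f_i:=f_{i \bmod m}$ for all integers $i$. The full $q$-reverse of $f(x)$ is $\bar f(x)=\sum_{i=0}^{m-1}\bar f_i x^{[i]}$ with $\bar f_i=f_{-i}^{[i]}=(f_{-i})^{q^i}$. For a linear map $T:\mathbb{F}_{q^m}\to\mathbb{F}_{q^m}$ and ordered bases $\mathcal{A}=\{\alpha_i\}$, $\mathcal{B}=\{\beta_j\}$, $[T]_{\mathcal{A}}^{\mathcal{B}}$ is the unique matrix over $\mathbb{F}_q$ with $T(\alpha_i)=\sum_j ([T]_{\mathcal{A}}^{\mathcal{B}})_{ij}\beta_j$ for all $i$ (row convention). The dual basis $\mathcal{A}'=\{\alpha'_j\}$ of $\mathcal{A}$ satisfies $\mathrm{Tr}(\alpha_i\alpha'_j)=1$ if $i=j$ and $0$ otherwise, where $\mathrm{Tr}(x)=\sum_{\ell=0}^{m-1}x^{[\ell]}$. All indices start at 0. *)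

(* Defs.v *)
(* F = F_q (a finite field, q = #|F|), L = F_{q^m} as a
   finite-dimensional field extension of F with \dim {:L} = m. *)
From HB Require Import structures.
From mathcomp Require Import all_boot all_order all_algebra all_field.
Set Implicit Arguments. Unset Strict Implicit. Unset Printing Implicit Defensive.
Import GRing.Theory.
Local Open Scope ring_scope.

Section QPoly.
Variables (F : finFieldType) (L : fieldExtType F) (m : nat).

Definition qpow (x : L) (i : nat) : L := x ^+ (#|F| ^ i).

Definition qeval (f : nat -> L) (x : L) : L :=
  \sum_(i < m) f i * qpow x i.

Definition qcoef (f : nat -> L) (i : nat) : L := f (i %% m)%N.

(* full q-reverse: bar f_i = (f_{-i})^{[i]}, with -i taken mod m *)
Definition qrev (f : nat -> L) (i : nat) : L :=
  qpow (qcoef f ((m - i %% m) %% m)%N) i.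

Definition qtrace (x : L) : L := \sum_(l < m) qpow x l.

Definition is_dual_basis (A A' : m.-tuple L) : Prop :=
  forall i j : 'I_m, qtrace (tnth A i * tnth A' j) = (i == j)%:R.

(* M = [T]_A^B (row convention): T(alpha_i) = sum_j M_ij beta_j *)
Definition is_mat_of (T : L -> L) (A B : m.-tuple L) (M : 'M[F]_m) : Prop :=
  forall i : 'I_m, T (tnth A i) = \sum_(j < m) M i j *: tnth B j.

End QPoly.

(* Main.v *)
Require Import Defs.
From HB Require Import structures.
From mathcomp Require Import all_boot all_order all_algebra all_field.
Import GRing.Theory.
Local Open Scope ring_scope.

Lemma frobD (F : finFieldType) (L : fieldExtType F) (x y : L) :
  (x + y) ^+ #|F| = x ^+ #|F| + y ^+ #|F|.
Proof.
have [p _ pcharFp] := finPcharP F; rewrite (card_pprimeChar pcharFp).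
elim: (logn _ _) => [|n IHn]; first by rewrite !expr1.
rewrite expnSr !exprM {}IHn.
by rewrite -(pchar_lalg L) in pcharFp; rewrite -!(pFrobenius_autE pcharFp) rmorphD.
Qed.

Lemma qpowS (F : finFieldType) (L : fieldExtType F) (x : L) i :
  qpow x i.+1 = qpow x i ^+ #|F|.
Proof. by rewrite /qpow expnSr exprM. Qed.

Lemma qpowD (F : finFieldType) (L : fieldExtType F) (x y : L) i :
  qpow (x + y) i = qpow x i + qpow y i.
Proof. by elim: i => [|i IH]; rewrite ?qpowS ?IH ?frobD // /qpow !expr1. Qed.

Lemma qpowM (F : finFieldType) (L : fieldExtType F) (x y : L) i :
  qpow (x * y) i = qpow x i * qpow y i.
Proof. by rewrite /qpow exprMn. Qed.

Lemma qpow0 (F : finFieldType) (L : fieldExtType F) i : qpow (0 : L) i = 0.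
Proof. by rewrite /qpow expr0n expn_eq0 (negPf (lt0n_neq0 (ltnW (finNzRing_gt1 F)))). Qed.

Lemma qpow_sum (F : finFieldType) (L : fieldExtType F) I (r : seq I) P (G : I -> L) i :
  qpow (\sum_(j <- r | P j) G j) i = \sum_(j <- r | P j) qpow (G j) i.
Proof.
by elim/big_rec2: _ => [|j a b _ <-]; rewrite ?qpow0 ?qpowD.
Qed.

Lemma qpowA (F : finFieldType) (L : fieldExtType F) (x : L) i j :
  qpow (qpow x i) j = qpow x (i + j)%N.
Proof. by rewrite /qpow -exprM expnD. Qed.

Lemma qpow_alg (F : finFieldType) (L : fieldExtType F) (c : F) i :
  qpow (c%:A : L) i = c%:A.
Proof.
elim: i => [|i IH]; first by rewrite /qpow expr1.
by rewrite qpowS IH -in_algE -rmorphXn expf_card.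
Qed.

Lemma qpowZ (F : finFieldType) (L : fieldExtType F) (c : F) (x : L) i :
  qpow (c *: x) i = c *: qpow x i.
Proof. by rewrite -[c *: x]mulr_algl -[c *: qpow x i]mulr_algl qpowM qpow_alg. Qed.

Lemma qpow_dim (F : finFieldType) (L : fieldExtType F) (x : L) :
  qpow x (\dim {:L}) = x.
Proof. by apply/eqP; rewrite /qpow -Fermat's_little_theorem memvf. Qed.

Lemma qpow_muldim (F : finFieldType) (L : fieldExtType F) (x : L) k :
  qpow x (k * \dim {:L})%N = x.
Proof.
elim: k => [|k IH]; first by rewrite mul0n /qpow expn0 expr1.
by rewrite mulSn addnC -qpowA IH qpow_dim.
Qed.

Lemma qpow_mod (F : finFieldType) (L : fieldExtType F) (x : L) i :
  qpow x i = qpow x (i %% \dim {:L})%N.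
Proof.
rewrite {1}(divn_eq i (\dim {:L})) addnC -qpowA.
exact: qpow_muldim.
Qed.

Lemma qtraceZ (F : finFieldType) (L : fieldExtType F) m (c : F) (x : L) :
  qtrace m (c *: x) = c *: qtrace m x.
Proof. by rewrite /qtrace scaler_sumr; apply: eq_bigr => l _; rewrite qpowZ. Qed.

Lemma qtrace_sum (F : finFieldType) (L : fieldExtType F) m I (r : seq I) P (G : I -> L) :
  qtrace m (\sum_(j <- r | P j) G j) = \sum_(j <- r | P j) qtrace m (G j).
Proof.
have qtD (u v : L) : qtrace m (u + v) = qtrace m u + qtrace m v.
  by rewrite /qtrace -big_split; apply: eq_bigr => l _; rewrite qpowD.
have qt0 : qtrace m (0 : L) = 0 by rewrite /qtrace big1 // => l _; rewrite qpow0.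
by elim/big_rec2: _ => [|j a b _ <-]; rewrite ?qt0 ?qtD.
Qed.

Lemma qtrace0 (F : finFieldType) (L : fieldExtType F) m : qtrace m (0 : L) = 0.
Proof. by rewrite /qtrace big1 // => l _; rewrite qpow0. Qed.

Lemma trace_coord (F : finFieldType) (L : fieldExtType F) m (X Y : m.-tuple L)
  (c : 'I_m -> F) j :
  is_dual_basis X Y ->
  qtrace m ((\sum_(i < m) c i *: tnth X i) * tnth Y j) = (c j)%:A.
Proof.
move=> dXY; rewrite mulr_suml qtrace_sum (bigD1 j) //= big1 ?addr0.
  by rewrite -scalerAl qtraceZ dXY eqxx.
by move=> i /negPf ij; rewrite -scalerAl qtraceZ dXY ij scaler0.
Qed.

Lemma coordP (F : finFieldType) (L : fieldExtType F) m (X Y : m.-tuple L)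
  (c : 'I_m -> F) x :
  basis_of fullv X -> is_dual_basis X Y ->
  (x = \sum_(i < m) c i *: tnth X i <-> forall j, qtrace m (x * tnth Y j) = (c j)%:A).
Proof.
move=> bX dXY; split=> [-> j|H]; first exact: trace_coord.
have Ex := coord_basis bX (memvf x).
have Ec j : coord X j x = c j.
  apply: (fmorph_inj (in_alg L)); rewrite /= -H.
  rewrite -(@trace_coord _ _ _ X Y (fun i => coord X i x) j dXY).
  congr (qtrace m (_ * _)); rewrite [RHS]Ex.
  by apply: eq_bigr => i _; rewrite (tnth_nth 0).
by rewrite {1}Ex; apply: eq_bigr => i _; rewrite (tnth_nth 0) Ec.
Qed.

Lemma valD n (u v : 'I_n.+1) : val (u + v) = ((val u + val v) %% n.+1)%N.
Proof. by []. Qed.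
Lemma valN n (u : 'I_n.+1) : val (- u) = ((n.+1 - val u) %% n.+1)%N.
Proof. by []. Qed.

Lemma adjoint (F : finFieldType) (L : fieldExtType F) n (f : nat -> L) (x y : L) :
  \dim {:L} = n.+1 ->
  qtrace n.+1 (qeval n.+1 f x * y) = qtrace n.+1 (x * qeval n.+1 (qrev n.+1 f) y).
Proof.
move=> dL.
have qm (z : L) (e : nat) : qpow z e = qpow z (e %% n.+1) by rewrite {1}qpow_mod dL.
rewrite /qtrace /qeval.
transitivity (\sum_(a < n.+1) \sum_(b < n.+1)
   qpow (f (val (a - b))) b * qpow x a * qpow y b).
  rewrite [RHS]exchange_big /=; apply: eq_bigr => b _.
  rewrite mulr_suml qpow_sum (reindex_inj (addIr (- b))).
  apply: eq_bigr => a _.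
  by rewrite !qpowM qpowA (qm x (_ + _)) -valD subrK.
apply: eq_bigr => a _.
rewrite mulr_sumr qpow_sum [RHS](reindex_inj (addIr (- a))).
apply: eq_bigr => b _.
rewrite !qpowM /qrev /qcoef !qpowA modn_mod (modn_small (ltn_ord _)) -valN opprB.
rewrite (qm y (_ + _)) (qm (f _) (_ + _)) -!valD subrK.
by rewrite mulrA [qpow x a * _]mulrC.
Qed.

Lemma dual_sym (F : finFieldType) (L : fieldExtType F) m (X Y : m.-tuple L) :
  is_dual_basis X Y -> is_dual_basis Y X.
Proof. by move=> d i j; rewrite mulrC d eq_sym. Qed.

Theorem lemma1 (F : finFieldType) (L : fieldExtType F) (m : nat)
  (f : nat -> L) (A B A' B' : m.-tuple L) (M : 'M[F]_m) :
  (0 < m)%N ->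
  basis_of fullv A -> basis_of fullv B ->
  is_dual_basis A A' -> is_dual_basis B B' ->
  (is_mat_of (qeval m f) A B M <-> is_mat_of (qeval m (qrev m f)) B' A' M^T).
Proof.
move=> m0 bA bB dA dB.
have dL := size_basis bA.
have dA' := @dual_sym _ _ _ _ _ dA.
have bA' : basis_of fullv A'.
  rewrite basisEfree subvf dL size_tuple leqnn andbT.
  rewrite andbT; apply/freeP => k Hk i.
  apply: (fmorph_inj (in_alg L)); rewrite rmorph0 /=.
  rewrite -(@trace_coord _ _ _ A' A k i dA').
  have -> : \sum_(j < m) k j *: tnth A' j = 0.
    by rewrite -[RHS]Hk; apply: eq_bigr => j _; rewrite (tnth_nth 0).
  by rewrite mul0r /qtrace big1 // => l _; rewrite qpow0.
case: m m0 f A B A' B' M bA bB dA dB dL dA' bA' => // n _ f A B A' B' M bA bB dA dB dL dA' bA'.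
split => H i.
- apply/(@coordP _ _ _ _ _ _ _ bA' dA') => j; rewrite mxE mulrC -adjoint //.
  by have /(@coordP _ _ _ _ _ _ _ bB dB) := H j; apply.
- apply/(@coordP _ _ _ _ _ _ _ bB dB) => j.
  have /(@coordP _ _ _ _ _ _ _ bA' dA') := H j => /(_ i).
  by rewrite mxE mulrC -adjoint.
Qed.
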